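(* Let $k,n\ge 1$ and let $x_1\le x_2\le\dots\le x_{kn}$ be real numbers. If $2\le k\le 16$, the partition of $\{1,\dots,kn\}$ into consecutive blocks $B_i=\{(i-1)k+1,\dots,ik\}$, $i=1,\dots,n$, is a minimal $k$-tuple partition with respect to $A$. If $2\le k\le 8$, the same partition is also minimal with respect to $S$.
   Context: For real numbers $x_1,\dots,x_k$ (repetitions allowed) define $A(x_1,\dots,x_k)=\sum_{1\le i<j\le k}|x_j-x_i|$ and $S(x_1,\dots,x_k)=\sum_{1\le i<j\le k}(x_j-x_i)^2$. Given real numbers $x_1,\dots,x_{kn}$, a $k$-tuple partition is a partition of the index set $\{1,\dots,kn\}$ into $n$ blocks, each of size $k$. Its cost with respect to $D\in\{A,S\}$ is the sum over blocks $\{i_1,\dots,i_k\}$ of $D(x_{i_1},\dots,x_{i_k})$. A $k$-tuple partition is minimal if its cost is less than or equal to the cost of every other $k$-tuple partition. *)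

(* Defs.v *)
From HB Require Import structures.
From mathcomp Require Import all_boot all_order all_algebra.
Set Implicit Arguments. Unset Strict Implicit. Unset Printing Implicit Defensive.
Import Order.TTheory GRing.Theory Num.Theory.
Local Open Scope ring_scope.

(* Indices are 0-based: {1,..,kn} is 'I_(k*n). A k-tuple partition into n
   blocks is encoded as a labelling f : 'I_(k*n) -> 'I_n whose every fibre
   has exactly k elements (block b = f^-1(b)). *)
Definition ktuple_partition (k n : nat) (f : 'I_(k * n) -> 'I_n) : Prop :=
  forall b : 'I_n, #|[pred i | f i == b]| = k.

Definition pairA (R : realFieldType) (a b : R) : R := `|b - a|.
Definition pairS (R : realFieldType) (a b : R) : R := (b - a) ^+ 2.

Definition cost (R : realFieldType) (d : R -> R -> R) (k n : nat)
    (x : 'I_(k * n) -> R) (f : 'I_(k * n) -> 'I_n) : R :=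
  \sum_(b < n) \sum_(i < k * n) \sum_(j < k * n | (i < j)%N && (f i == b) && (f j == b))
     d (x i) (x j).

Lemma consec_proof (k n : nat) (i : 'I_(k * n)) : (i %/ k < n)%N.
Proof.
case: i => i /=; case: k => [|k] Hi; first by rewrite mul0n in Hi.
by rewrite ltn_divLR // mulnC.
Qed.

(* The consecutive partition: 0-based index i goes to block i %/ k,
   i.e. block b = {b*k, ..., b*k + k - 1}. *)
Definition consec (k n : nat) (i : 'I_(k * n)) : 'I_n :=
  Ordinal (consec_proof i).

Definition minimal (R : realFieldType) (d : R -> R -> R) (k n : nat)
    (x : 'I_(k * n) -> R) (f : 'I_(k * n) -> 'I_n) : Prop :=
  ktuple_partition f /\
  forall g : 'I_(k * n) -> 'I_n, ktuple_partition g -> cost d x f <= cost d x g.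

(* Main.v *)
Require Import Defs.
From HB Require Import structures.
From mathcomp Require Import all_boot all_order all_algebra.
From mathcomp Require Import zify.
Import Order.TTheory GRing.Theory Num.Theory.

Section Comb.
Variables (k n : nat).
Local Notation N := (k * n).
Implicit Types f : 'I_(k*n) -> 'I_n.

Lemma count_int (M a c : nat) :
  \sum_(i < M) ((a <= i) && (i < c) : nat) = minn M c - a.
Proof.
elim: M => [|M IH]; first by rewrite big_ord0; lia.
rewrite big_ord_recr /= IH.
case Ha: (a <= M); case Hc: (M < c) => /=; lia.
Qed.

Lemma cardk f b : ktuple_partition f -> \sum_(i < N) (f i == b : nat) = k.
Proof.
move=> kt; rewrite -[RHS](kt b) -sum1_card [RHS]big_mkcond /=.
by apply: eq_bigr => i _; rewrite inE; case: (f i == b).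
Qed.

Lemma group f (F : 'I_n -> nat) : ktuple_partition f ->
  \sum_(i < N) F (f i) = k * \sum_(b < n) F b.
Proof.
move=> kt.
transitivity (\sum_(i < N) \sum_(b < n) ((f i == b) * F b)).
  apply: eq_bigr => i _; rewrite (bigD1 (f i)) //= eqxx mul1n big1 ?addn0 //.
  by move=> b; rewrite eq_sym => /negbTE ->.
rewrite exchange_big big_distrr /=; apply: eq_bigr => b _.
by rewrite -big_distrl /= cardk.
Qed.

Lemma group2 f (G : 'I_N -> nat) :
  \sum_(b < n) \sum_(j < N) ((f j == b) * G j) = \sum_(j < N) G j.
Proof.
rewrite exchange_big /=; apply: eq_bigr => j _.
rewrite (bigD1 (f j)) //= eqxx mul1n big1 ?addn0 //.
by move=> b; rewrite eq_sym => /negbTE ->.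
Qed.

Definition Q f (lo hi : nat) : nat :=
  \sum_(i < N) \sum_(j < N) ((i < j) && (f i == f j) && (i <= lo) && (hi < j)).

Lemma arith1 (X p m a r : nat) : X <= p -> X <= k * m -> p = a * k + r -> r <= k ->
  X + r * a <= a * k + r * m.
Proof.
move=> h1 h2 hp hr.
case: (leqP m a) => hm.
  have : r * (a - m) <= k * (a - m) by apply: leq_mul.
  nia.
have : r * a <= r * m by apply: leq_mul; lia.
nia.
Qed.

Lemma Qf_bound f lo hi : ktuple_partition f -> 0 < k -> lo <= hi -> hi < N ->
  lo %/ k = hi %/ k ->
  (lo.+1 - lo %/ k * k) * (lo %/ k * k + k - hi.+1) <= Q f lo hi.
Proof.
move=> kt k0 lohi hiN eqd.
set W := fun b : 'I_n => \sum_(j < N) ((f j == b) && (j <= hi) : nat).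
have Wk b : W b <= k.
  rewrite -(cardk f b kt); apply: leq_sum => j _; case: (f j == b) => //=; exact: leq_b1.
have Ht b : \sum_(j < N) ((f j == b) && (hi < j) : nat) = k - W b.
  have Hs : W b + \sum_(j < N) ((f j == b) && (hi < j) : nat) = k.
    rewrite -[X in _ = X](cardk f b kt) /W -big_split /=.
    apply: eq_bigr => j _; by case: (f j == b) => //=; case: leqP.
  move: Hs; lia.
have HQ : Q f lo hi = \sum_(i < N) ((i <= lo) * (k - W (f i))).
  apply: eq_bigr => i _; rewrite -Ht big_distrr /=; apply: eq_bigr => j _.
  rewrite [f j == f i]eq_sym.
  case: (leqP i lo) => hil; case: (ltnP hi j) => hj; rewrite ?andbF ?andbT ?mul1n ?mul0n //=.
  by have -> : i < j by lia.
have Hp : \sum_(i < N) (i <= lo : nat) = lo.+1.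
  have := count_int N 0 lo.+1; rewrite /=.
  have -> : minn N lo.+1 = lo.+1 by lia.
  by rewrite subn0.
set Y := \sum_(i < N) ((i <= lo) * W (f i)).
have HQY : Q f lo hi + Y = k * lo.+1.
  rewrite HQ /Y -big_split /= -Hp big_distrr /=; apply: eq_bigr => i _.
  by rewrite -mulnDr subnK // mulnC.
set X := fun t : nat => \sum_(i < N) ((i <= lo) && (t < W (f i)) : nat).
have HY : Y = \sum_(t < k) X t.
  rewrite /X exchange_big /=; apply: eq_bigr => i _.
  have e : W (f i) = \sum_(t < k) ((0 <= t) && (t < W (f i)) : nat).
    rewrite count_int; have := Wk (f i); lia.
  rewrite {1}e big_distrr /=; apply: eq_bigr => t _.
  by rewrite mulnb.
set nt := fun t : nat => \sum_(b < n) (t < W b : nat).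
have HX1 t : X t <= lo.+1.
  rewrite -Hp /X; apply: leq_sum => i _.
  case: (i <= lo) => //=; exact: leq_b1.
have HX2 t : X t <= k * nt t.
  rewrite /nt -(group f (fun b => (t < W b : nat)) kt) /X.
  apply: leq_sum => i _.
  by case: (i <= lo).
have Hnt : \sum_(t < k) nt t = hi.+1.
  rewrite /nt exchange_big /=.
  transitivity (\sum_(b < n) W b).
    apply: eq_bigr => b _; have := count_int k 0 (W b); rewrite /=.
    have -> : minn k (W b) = W b by have := Wk b; lia.
    by rewrite subn0.
  rewrite /W.
  transitivity (\sum_(b < n) \sum_(j < N) ((f j == b) * (j <= hi))).
    apply: eq_bigr => b _; apply: eq_bigr => j _.
    by rewrite mulnb.
  rewrite (group2 f (fun j => (j <= hi : nat))).
  have := count_int N 0 hi.+1; rewrite /=.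
  have -> : minn N hi.+1 = hi.+1 by lia.
  by rewrite subn0.
set a := lo %/ k.
have h1 : a * k <= lo by apply: leq_divM.
have h2 : lo < a.+1 * k by apply: ltn_ceil.
have h3 : a * k <= hi by rewrite /a eqd; apply: leq_divM.
have h4 : hi < a.+1 * k by rewrite /a eqd; apply: ltn_ceil.
set r := lo.+1 - a * k.
have hp : lo.+1 = a * k + r by rewrite /r; lia.
have hr : r <= k by rewrite /r; lia.
have Hsum : Y + k * (r * a) <= k * (a * k) + r * hi.+1.
  have : \sum_(t < k) (X t + r * a) <= \sum_(t < k) (a * k + r * nt t).
    by apply: leq_sum => t _; apply: arith1.
  rewrite !big_split /= !sum_nat_const card_ord -big_distrr /= -HY Hnt.
  by rewrite mulnC [k * (a * k)]mulnC.
set s := hi.+1 - a * k.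
have hq : hi.+1 = a * k + s by rewrite /s; lia.
have hs : s <= k by rewrite /s; lia.
have -> : a * k + k - hi.+1 = k - s by rewrite /s; lia.
rewrite -/r.
move: HQY Hsum; rewrite hp hq => HQY Hsum.
have e1 : Y <= k * (a * k) + r * s by nia.
have e2 : r * (k - s) + r * s = r * k by rewrite -mulnDr subnK.
nia.
Qed.

Lemma consec_eq (i j : 'I_N) : (@consec k n i == @consec k n j) = (i %/ k == j %/ k).
Proof. by []. Qed.

Lemma Qc_zero lo hi : lo <= hi -> lo %/ k != hi %/ k -> Q (@consec k n) lo hi = 0.
Proof.
move=> lohi ne.
apply: big1 => i _; apply: big1 => j _.
case H: (_ && _) => //.
move: H => /andP[/andP[/andP[_]]]; rewrite consec_eq => /eqP E Hl Hh.
have d1 := leq_div2r k Hl.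
have d2 := leq_div2r k lohi.
have d3 : hi %/ k <= j %/ k by apply: leq_div2r; lia.
move: ne; rewrite -E in d3; move: d1 d2 d3.
set u := i %/ k; set v := lo %/ k; set w := hi %/ k; lia.
Qed.

Lemma Qc_bound lo hi : 0 < k -> lo <= hi -> lo %/ k = hi %/ k ->
  Q (@consec k n) lo hi <= (lo.+1 - lo %/ k * k) * (lo %/ k * k + k - hi.+1).
Proof.
move=> k0 lohi eqd; set a := lo %/ k.
apply: (@leq_trans (\sum_(i < N) \sum_(j < N)
   (((a * k <= i) && (i < lo.+1)) * ((hi.+1 <= j) && (j < a * k + k))))).
  apply: leq_sum => i _; apply: leq_sum => j _.
  case H: (_ && _) => //.
  move: H => /andP[/andP[/andP[_]]]; rewrite consec_eq => /eqP E Hl Hh.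
  have d1 := leq_div2r k Hl.
  have d2 := leq_div2r k lohi.
  have d3 : hi %/ k <= j %/ k by apply: leq_div2r; lia.
  have ea : i %/ k = a by rewrite /a; lia.
  have ea' : j %/ k = a by lia.
  have g1 := leq_divM i k.
  have g2 := ltn_ceil j k0.
  rewrite ea in g1; rewrite ea' in g2.
  have -> : (a * k <= i) && (i < lo.+1) by apply/andP; split; lia.
  have -> : (hi.+1 <= j) && (j < a * k + k) by apply/andP; split; lia.
  by [].
under eq_bigr => i _ do rewrite -big_distrr /=.
rewrite -big_distrl /= !count_int.
apply: leq_mul; lia.
Qed.

Lemma key f lo hi : ktuple_partition f -> 0 < k -> lo <= hi -> hi < N ->
  Q (@consec k n) lo hi <= Q f lo hi.
Proof.
move=> kt k0 lohi hiN.
case: (eqVneq (lo %/ k) (hi %/ k)) => e.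
  by apply: leq_trans; [apply: Qc_bound | apply: Qf_bound].
by rewrite Qc_zero.
Qed.

Lemma consec_part : 0 < k -> ktuple_partition (@consec k n).
Proof.
move=> k0 b.
rewrite -sum1_card big_mkcond /=.
transitivity (\sum_(i < N) ((b * k <= i) && (i < b * k + k) : nat)).
  apply: eq_bigr => i _; rewrite inE.
  have -> : (@consec k n i == b) = (i %/ k == b) by [].
  have g1 := leq_divM i k; have g2 := ltn_ceil i k0.
  case: (eqVneq (i %/ k) b) => [<-|ne].
    have -> : (i %/ k * k <= i < i %/ k * k + k) by apply/andP; split; lia.
    by [].
  have -> : (b * k <= i < b * k + k) = false.
    apply/negbTE/negP => /andP[h1 h2]; apply/negP: ne; rewrite negbK.
    rewrite eqn_leq -ltnS ltn_divLR // leq_divRL //; apply/andP; split; lia.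
  by [].
rewrite count_int; have := ltn_ord b; nia.
Qed.

End Comb.

Local Open Scope ring_scope.

Section Real.
Variables (R : realFieldType) (k n : nat) (x : 'I_(k * n) -> R).
Local Notation N := (k * n).
Hypothesis sorted : forall i j : 'I_(k * n), (i <= j)%N -> x i <= x j.

Definition y (t : nat) : R := if @insub _ (fun t => t < N)%N 'I_N t is Some i then x i else 0.

Lemma yE (i : 'I_N) : y i = x i.
Proof. by rewrite /y valK. Qed.

Definition dl (t : nat) : R := if (t.+1 < N)%N then y t.+1 - y t else 0.

Lemma dl_ge0 t : 0 <= dl t.
Proof.
rewrite /dl; case: ifP => h //.
have h' : (t < N)%N by apply: ltnW.
have := yE (Ordinal h); have := yE (Ordinal h') => /= -> ->.
by rewrite subr_ge0; apply: sorted => /=.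
Qed.

Lemma window (F : nat -> R) a b M : (a <= b)%N -> (b <= M)%N ->
  \sum_(a <= m < b) F m = \sum_(m < M) (((a <= m) && (m < b))%N%:R * F m).
Proof.
move=> hab hbM.
rewrite -(big_mkord xpredT (fun m => ((a <= m) && (m < b))%N%:R * F m)).
rewrite (big_cat_nat (leq0n a) (leq_trans hab hbM)) /= (big_cat_nat hab hbM) /=.
have z1 : \sum_(0 <= m < a) (((a <= m) && (m < b))%N%:R * F m) = 0.
  rewrite big_nat; apply: big1 => m /andP[_ hm].
  by rewrite leqNgt hm /= mul0r.
have z2 : \sum_(b <= m < M) (((a <= m) && (m < b))%N%:R * F m) = 0.
  rewrite big_nat; apply: big1 => m /andP[hm _].
  by rewrite ltnNge hm andbF mul0r.
rewrite z1 z2 add0r addr0 big_nat [RHS]big_nat.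
by apply: eq_bigr => m ->; rewrite mul1r.
Qed.

Lemma tele (i j : 'I_N) : (i <= j)%N ->
  x j - x i = \sum_(m < N) (((i <= m) && (m < j))%N%:R * dl m).
Proof.
move=> hij; rewrite -!yE -(telescope_sumr (fun t => y t) hij) /=.
rewrite -(window _ _ _ _ hij (ltnW (ltn_ord j))) /=.
apply: eq_big_nat => m /andP[_ hm].
by rewrite /dl (leq_ltn_trans hm (ltn_ord j)).
Qed.

Lemma cost_pairs d f : cost d x f =
  \sum_(i < N) \sum_(j < N) (if (i < j)%N && (f i == f j) then d (x i) (x j) else 0).
Proof.
rewrite /cost exchange_big /=; apply: eq_bigr => i _.
under eq_bigr do rewrite big_mkcond /=.
rewrite exchange_big /=; apply: eq_bigr => j _.
rewrite (bigD1 (f i)) //= big1 ?addr0.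
  by rewrite eqxx andbT [f j == f i]eq_sym.
by move=> b nb; rewrite eq_sym in nb; rewrite (negbTE nb) andbF.
Qed.

Lemma costA f : cost (@pairA R) x f = \sum_(m < N) ((@Q k n f m m)%:R * dl m).
Proof.
rewrite cost_pairs.
transitivity (\sum_(i < N) \sum_(j < N) \sum_(m < N)
  (((i < j) && (f i == f j) && (i <= m) && (m < j))%N%:R * dl m)).
  apply: eq_bigr => i _; apply: eq_bigr => j _.
  case c: ((i < j)%N && (f i == f j)) => /=.
    move/andP: c => [hij _].
    have hij' := ltnW hij.
    rewrite /pairA ger0_norm ?subr_ge0; last exact: sorted.
    by rewrite tele.
  by rewrite big1 // => m _; rewrite mul0r.
under eq_bigr => i _ do rewrite exchange_big /=.
rewrite exchange_big /=; apply: eq_bigr => m _.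
rewrite /Q natr_sum mulr_suml; apply: eq_bigr => i _.
by rewrite natr_sum mulr_suml.
Qed.

Lemma indM (a b : bool) (u v : R) :
  ((a : nat)%:R * u) * ((b : nat)%:R * v) = ((a && b : bool) : nat)%:R * (u * v).
Proof. by case: a; case: b; rewrite /= ?mul1r ?mul0r ?mulr0. Qed.

Lemma costS f : cost (@pairS R) x f =
  \sum_(m < N) \sum_(m' < N) ((@Q k n f (minn m m') (maxn m m'))%:R * (dl m * dl m')).
Proof.
rewrite cost_pairs.
transitivity (\sum_(i < N) \sum_(j < N) \sum_(m < N) \sum_(m' < N)
  (((i < j) && (f i == f j) && (i <= minn m m') && (maxn m m' < j))%N%:R * (dl m * dl m'))).
  apply: eq_bigr => i _; apply: eq_bigr => j _.
  case c: ((i < j)%N && (f i == f j)) => /=.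
    move/andP: c => [hij _].
    rewrite /pairS tele ?(ltnW hij) // expr2 mulr_suml; apply: eq_bigr => m _.
    rewrite mulr_sumr; apply: eq_bigr => m' _.
    rewrite indM; congr (_%:R * _); congr nat_of_bool.
    rewrite leq_min gtn_max -!andbA.
    by apply/idP/idP => /and4P[? ? ? ?]; apply/and4P; split.
  by rewrite big1 // => m _; rewrite big1 // => m' _; rewrite mul0r.
under eq_bigr => i _ do under eq_bigr => j _ do rewrite exchange_big /=.
under eq_bigr => i _ do rewrite exchange_big /=.
rewrite exchange_big /=; apply: eq_bigr => m _.
under eq_bigr => i _ do rewrite exchange_big /=.
rewrite exchange_big /=; apply: eq_bigr => m' _.
rewrite /Q natr_sum mulr_suml; apply: eq_bigr => i _.
by rewrite natr_sum mulr_suml [minn m' m]minnC [maxn m' m]maxnC [dl m' * dl m]mulrC.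
Qed.

End Real.

Theorem mainTheorem5 (R : realFieldType) (k n : nat) (x : 'I_(k * n) -> R) :
  (1 <= k)%N -> (1 <= n)%N ->
  (forall i j : 'I_(k * n), (i <= j)%N -> x i <= x j) ->
  ((2 <= k <= 16)%N -> minimal (@pairA R) x (@consec k n)) /\
  ((2 <= k <= 8)%N -> minimal (@pairS R) x (@consec k n)).
Proof.
move=> k0 n1 hs.
split=> _; (split; first exact: consec_part) => g kg.
  rewrite (costA _ _ _ _ hs) (costA _ _ _ _ hs).
  apply: ler_sum => m _; apply: ler_wpM2r; first exact: dl_ge0.
  by rewrite ler_nat; apply: key.
rewrite !costS.
apply: ler_sum => m _; apply: ler_sum => m' _.
apply: ler_wpM2r; first by apply: mulr_ge0; apply: dl_ge0.
rewrite ler_nat; apply: key => //.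
  exact: leq_trans (geq_minl _ _) (leq_maxl _ _).
by rewrite gtn_max !ltn_ord.
Qed.
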